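(* Let $\gamma>1$, $f\in L^\infty(0,1)$, and let $u$ satisfy the ordinary differential equation \[ x_n\,\partial_n^2u+\gamma\,\partial_nu=f\quad\text{on }(0,1). \] If $x_n\partial_nu\in L^\infty(0,1)$, then $u\in W^{2,\infty}_*(0,1)$ and \[ \|\partial_nu\|_{L^\infty}\le\frac1\gamma\|f\|_{L^\infty},\qquad \|x_n\partial_n^2u\|_{L^\infty}\le 2\|f\|_{L^\infty}. \]
   Context: $x_n\in(0,1)$ is the variable and $\partial_n=d/dx_n$. $W^{2,\infty}_*(0,1)=\{u:\ \partial_nu\in L^\infty(0,1),\ x_n\partial_n^2u\in L^\infty(0,1)\}/\mathbb R$ with norm $\|\partial_nu\|_{L^\infty}+\|x_n\partial_n^2u\|_{L^\infty}$. *)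

(* Defs.v *)
From HB Require Import structures.
From mathcomp Require Import all_boot all_order all_algebra.
From mathcomp Require Import all_classical all_reals all_analysis.
Set Implicit Arguments. Unset Strict Implicit. Unset Printing Implicit Defensive.
Import Order.TTheory GRing.Theory Num.Theory.
Import numFieldNormedType.Exports.
Local Open Scope classical_set_scope.
Local Open Scope ring_scope.

Definition ae01 (R : realType) (P : R -> Prop) : Prop :=
  {ae (@lebesgue_measure R), forall x : R, 0 < x < 1 -> P x}.

Definition Linf01 (R : realType) (f : R -> R) : Prop :=
  measurable_fun (`]0, 1[ : set R) f /\ exists M : R, ae01 (fun x => `|f x| <= M).

(* u in W^{2,1}_loc(0,1) with first derivative g = d_n u and second
   (weak) derivative h = d_n^2 u:  u is differentiable on (0,1) with
   derivative g, and g is locally absolutely continuous on (0,1) with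
   density h, i.e. h is integrable on every [a,b] in (0,1) and
   g b - g a = \int_a^b h. *)
Definition W21loc_derivs (R : realType) (u g h : R -> R) : Prop :=
  (forall x : R, 0 < x < 1 -> is_derive x 1 u (g x)) /\
  (forall a b : R, 0 < a -> a <= b -> b < 1 ->
     (@lebesgue_measure R).-integrable (`[a, b] : set R) (EFin \o h) /\
     g b - g a = Rintegral (@lebesgue_measure R) (`[a, b] : set R) h).

Definition W2inf_star (R : realType) (u g h : R -> R) : Prop :=
  W21loc_derivs u g h /\ Linf01 g /\ Linf01 (fun x => x * h x).

(* Main.v *)
Require Import Defs.
From HB Require Import structures.
From mathcomp Require Import all_boot all_order all_algebra.
From mathcomp Require Import all_classical all_reals all_analysis.
From mathcomp Require Import ring lra measurable_realfun.
Import Order.TTheory GRing.Theory Num.Theory.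
Import numFieldNormedType.Exports.
Local Open Scope classical_set_scope.
Local Open Scope ring_scope.
Section Aux.
Variable R : realType.
Notation mu := (@lebesgue_measure R).

Lemma ae_le_Rintegral (D : set (measurableTypeR R)) (f1 f2 : R -> R) : measurable D ->
  mu.-integrable D (EFin \o f1) -> mu.-integrable D (EFin \o f2) ->
  {ae mu, forall x, D x -> f1 x <= f2 x} ->
  \int[mu]_(x in D) f1 x <= \int[mu]_(x in D) f2 x.
Proof.
move=> mD i1 i2 [N [mN N0 sub]].
have E (f : R -> R) : mu.-integrable D (EFin \o f) ->
    \int[mu]_(x in D) f x = \int[mu]_(x in D `\` N) f x.
  by move=> fi; rewrite /Rintegral (negligible_integral mN mD fi N0).
rewrite (E _ i1) (E _ i2).
have mDN : measurable (D `\` N) by exact: measurableD.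
apply: le_Rintegral => //.
- by apply: (integrableS mD mDN) i1 => x [].
- by apply: (integrableS mD mDN) i2 => x [].
move=> x [Dx Nx]; case: (boolP (f1 x <= f2 x)) => // /negP nle.
exfalso; apply: Nx; apply: sub => /= /(_ Dx) H.
by apply: nle.
Qed.

Lemma cst_integrable (a b k : R) : mu.-integrable `[a, b] (EFin \o cst k).
Proof.
apply: continuous_compact_integrable; first exact: segment_compact.
by apply: continuous_subspaceT => x; exact: cst_continuous.
Qed.

Lemma ae01_itv_contra (P : R -> Prop) a b : 0 <= a -> a < b -> b <= 1 ->
  ae01 P -> (forall x : R, a < x < b -> ~ P x) -> False.
Proof.
move=> a0 ab b1 [N [mN N0 sub]] nP.
have : (mu `]a, b[ <= mu N)%E.
  apply: le_measure; rewrite ?inE //.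
  move=> x /=; rewrite in_itv /= => /andP[ax xb]; apply: sub => /= H.
  apply: (nP x); first by rewrite ax xb.
  by apply: H; apply/andP; split; lra.
rewrite N0 lebesgue_measure_itv /= lte_fin ab -EFinD lee_fin.
lra.
Qed.


Lemma aeS (P Q : R -> Prop) : {ae mu, forall x, P x} -> (forall x, P x -> Q x) -> {ae mu, forall x, Q x}.
Proof.
move=> [N [mN N0 sub]] PQ; exists N; split => // x /= nQ.
by apply: sub => /= /PQ.
Qed.

Lemma aeS2 (P Q S : R -> Prop) : {ae mu, forall x, P x} -> {ae mu, forall x, Q x} -> (forall x, P x -> Q x -> S x) -> {ae mu, forall x, S x}.
Proof.
move=> HP HQ PQ; apply: (negligibleS _ (negligibleU HP HQ)) => x /= nS.
case: (pselect (P x)) => [Px|nPx]; last by left.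
by right => /= Qx; exact/nS/PQ.
Qed.


Lemma Rint_cst_itv (a b k : R) : a <= b -> \int[mu]_(x in `[a,b]) (cst k x) = k * (b - a).
Proof.
move=> ab; rewrite Rintegral_cst //; congr (_ * _).
have := lebesgue_measure_itv `[a, b]; rewrite /= lte_fin.
case: ltgtP ab => // [ab' _ E|-> _ E].
  by rewrite /= E -EFinD.
by rewrite /= E subrr.
Qed.

End Aux.
Section Core.
Variable R : realType.
Notation mu := (@lebesgue_measure R).
Variables (gamma M K : R) (G H : R -> R).
Hypothesis g1 : 1 < gamma.
Hypothesis Gc : forall x : R, 0 < x < 1 -> {for x, continuous G}.
Hypothesis GI : forall a b : R, 0 < a -> a <= b -> b < 1 ->
  mu.-integrable `[a, b] (EFin \o H) /\
  G b - G a = \int[mu]_(x in `[a, b]) H x.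
Hypothesis HB : ae01 (fun x => x * H x <= M - gamma * G x).
Hypothesis GB : ae01 (fun x => `|x * G x| <= K).

Lemma stepD (a b m : R) : 0 < a -> a <= b -> b < 1 -> M - gamma * m <= 0 ->
  (forall s, a <= s <= b -> m <= G s) ->
  b * (G b - G a) <= (M - gamma * m) * (b - a).
Proof.
move=> a0 ab b1 Mm Gm; have g1l := g1.
have [iH ->] := GI _ _ a0 ab b1.
set A := M - gamma * m.
have b0 : 0 < b by lra.
have : \int[mu]_(x in `[a, b]) H x <= \int[mu]_(x in `[a, b]) (cst (A / b) x).
  apply: ae_le_Rintegral => //; first exact: cst_integrable.
  have KK := @aeS R _ (fun x : R => x \in `[a, b] -> H x <= cst (A / b) x) HB; apply: KK => x Hx /=; rewrite in_itv /= => /andP[ax xb].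
  have /Hx {}Hx : 0 < x < 1 by apply/andP; split; lra.
  have := Gm x; rewrite ax xb => /(_ isT) Gx.
  rewrite ler_pdivlMr //.
  have gm : gamma * m <= gamma * G x by apply: ler_wpM2l; [lra | exact: Gx].
  have xA : x * H x <= A by rewrite /A; lra.
  have Hx0 : H x <= 0 by nra.
  nra.
rewrite Rint_cst_itv // => HI.
have -> : (A * (b - a)) = b * (A / b * (b - a)) by field; lra.
by rewrite ler_pM2l.
Qed.

Lemma hT : gamma * (M / gamma) = M.
Proof. by rewrite mulrC divfK // gt_eqF // (lt_trans ltr01 g1). Qed.

Lemma keyL (x0 : R) : 0 < x0 < 1 -> M / gamma < G x0 ->
  forall a : R, 0 < a <= x0 -> G x0 <= G a.
Proof.
move=> /andP[x00 x01] Gx0 a /andP[a0 ax0].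
have g1l := g1; have hTl := hT.
set T := M / gamma in Gx0 hTl *.
set c := G x0 - T.
have c0 : 0 < c by rewrite /c; lra.
have Mneg : M - gamma * (T + c / 2) <= 0 by nra.
have half : forall s : R, a <= s <= x0 -> T + c / 2 <= G s.
  move=> s /andP[aS sx0].
  case: (boolP (T + c / 2 <= G s)) => // /negP Hs; exfalso.
  pose S := [set y : R | (a <= y <= x0) /\ G y < T + c / 2].
  have Ss : S s by split; [rewrite aS sx0 | rewrite ltNge; exact/negP].
  have S0 : S !=set0 by exists s.
  have ubS : ubound S x0 by move=> y [/andP[_ yx0] _].
  have hsS : has_sup S by split => //; exists x0.
  set q := sup S.
  have aq : a <= q by apply: le_trans (sup_upper_bound hsS Ss); lra.
  have qx0 : q <= x0 by exact: ge_sup.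
  have clA : forall t : R, q < t <= x0 -> G x0 <= G t.
    move=> t /andP[qt tx0].
    have notS : forall y : R, t <= y <= x0 -> T + c / 2 <= G y.
      move=> y /andP[ty yx0].
      case: (boolP (T + c / 2 <= G y)) => // /negP Hy; exfalso.
      have Sy : S y by split; [apply/andP; split; lra | rewrite ltNge; exact/negP].
      have := sup_upper_bound hsS Sy; rewrite -/q; lra.
    have := stepD t x0 (T + c / 2).
    move=> /(_ ltac:(lra) ltac:(lra) ltac:(lra) Mneg notS) st.
    have : (M - gamma * (T + c / 2)) * (x0 - t) <= 0.
      by apply: mulr_le0_ge0 => //; lra.
    nra.
  have q01 : 0 < q < 1 by apply/andP; split; lra.
  have c4 : 0 < c / 4 by lra.
  move: (Gc q q01) => /cvgrPdist_lt /(_ _ c4) /nbhs_ballP [d d0 Hd].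
  have [s1 Ss1 s1q] := sup_adherent d0 hsS.
  have s1q' : s1 <= q := sup_upper_bound hsS Ss1.
  rewrite -/q in s1q; have d0' : 0 < d := d0.
  have hs1 : ball q d s1.
    rewrite /ball /= ger0_norm; [lra | rewrite subr_ge0 //].
  move: (Hd s1 hs1) => /= /ltr_normlP [h1 h2].
  case: Ss1 => _ Gs1.
  have [t [qt tx0 tq Gt]] : exists t, [/\ q <= t, t <= x0, `|q - t| < d & G x0 <= G t].
    case: (ltrP q x0) => [qlt|qge].
      case: (lerP (q + d / 2) x0) => [hle|hgt].
        exists (q + d / 2); split; try lra.
          by rewrite distrC addrC addKr ger0_norm; lra.
        by apply: clA; apply/andP; split; lra.
      exists x0; split; try lra.
      by rewrite ler0_norm; lra.
    exists q; split; try lra.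
      by rewrite subrr normr0.
    by have -> : q = x0 by lra.
  have ht : ball q d t by rewrite /ball /=.
  move: (Hd t ht) => /= /ltr_normlP [h3 h4].
  rewrite /c in c4 h1 h2 h3 h4 Gs1 Mneg; lra.
have := stepD a x0 (T + c / 2).
move=> /(_ a0 ax0 x01 Mneg half) st.
have : (M - gamma * (T + c / 2)) * (x0 - a) <= 0.
  by apply: mulr_le0_ge0 => //; lra.
nra.
Qed.

Lemma boundG (x : R) : 0 < x < 1 -> G x <= M / gamma.
Proof.
move=> /andP[x0 x1]; have g1l := g1; have hTl := hT.
set T := M / gamma in hTl *.
rewrite leNgt; apply/negP => Gx.
set c := G x - T.
have c0 : 0 < c by rewrite /c; lra.
set r := (1 + gamma) / 2.
have r1 : 1 < r by rewrite /r; lra.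
have rg : r < gamma by rewrite /r; lra.
have r0 : 0 < r by lra.
set rho := (r + gamma * (r - 1)) / (r * r).
have hrho : rho * (r * r) = r + gamma * (r - 1).
  by rewrite /rho divfK // mulf_neq0 // gt_eqF.
have rr0 : 0 < r * r by nra.
have rho1 : 1 < rho.
  have : r * r < r + gamma * (r - 1) by nra.
  by rewrite -hrho => h; rewrite -(ltr_pM2r rr0) mul1r.
set d := rho - 1.
have d0 : 0 < d by rewrite /d; lra.
pose b (k : nat) := x * (r^-1) ^+ k.
have ri0 : 0 < r^-1 by rewrite invr_gt0.
have rri : r * r^-1 = 1 by rewrite divff // gt_eqF.
have ri1 : r^-1 < 1 by rewrite invf_lt1.
have bS k : b k.+1 = b k * r^-1 by rewrite /b exprSr mulrA.
have claim : forall k : nat, [/\ 0 < b k, b k <= x, T < G (b k) &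
    c * x * (1 + k%:R * d) <= b k * (G (b k) - T)].
  elim=> [|k [bk0 bkx Gbk IH]].
    rewrite /b expr0 mulr1 mul0r addr0 mulr1; split => //; rewrite /c; lra.
  set bb := b k in bk0 bkx Gbk IH *; set b' := b k.+1.
  have hb' : b' = bb * r^-1 := bS k.
  have hbb : r * b' = bb by rewrite hb' mulrCA rri mulr1.
  have b'0 : 0 < b' by rewrite hb' mulr_gt0.
  have b'b : b' <= bb by nra.
  have bb1 : bb < 1 by lra.
  have st := stepD b' bb (G bb) b'0 b'b bb1.
  have MG : M - gamma * G bb <= 0 by nra.
  have kL : forall s : R, b' <= s <= bb -> G bb <= G s.
    move=> s /andP[h1 h2]; apply: keyL => //; apply/andP; split; lra.
  have st2 := st MG kL.
  set W := G bb - T in IH *.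
  set W' := G b' - T.
  have e1 : b' * (r * (G bb - G b')) <= b' * ((r - 1) * (M - gamma * G bb)).
    have E2 : bb - b' = (r - 1) * b' by rewrite -hbb; ring.
    rewrite mulrA (mulrC b' r) hbb; rewrite E2 in st2; lra.
  rewrite ler_pM2l // in e1.
  have e2 : r * W' >= W * (rho * (r * r)).
    rewrite hrho /W /W'; nra.
  have e3 : W' >= W * rho * r.
    have : r * W' >= r * (W * rho * r) by nra.
    by rewrite ler_pM2l.
  have e4 : b' * W' >= bb * W * rho.
    have : b' * W' >= b' * (W * rho * r) by rewrite ler_pM2l.
    by rewrite -hbb; nra.
  have Wpos : 0 < W by rewrite /W; lra.
  split => //; first by lra.
    have hW : W = G bb - T by [].
    have hW' : W' = G b' - T by [].
    have rr : 1 < rho * r by nra.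
    have : W < W * (rho * r) by rewrite -{1}(mulr1 W) ltr_pM2l.
    rewrite mulrA => ?; lra.
  rewrite -/W'.
  have kd : 0 <= k%:R * d by apply: mulr_ge0 => //; lra.
  have cx : 0 < c * x by nra.
  rewrite -addn1 natrD [(_ + 1) * d]mulrDl ?mul1r.
  have h1 : c * x * (1 + k%:R * d) * rho <= bb * W * rho by rewrite ler_pM2r //; lra.
  have hrd : rho = 1 + d by rewrite /d; ring.
  have h2 : 0 <= c * x * (k%:R * d) * d.
    by apply: mulr_ge0; [apply: mulr_ge0 | ]; lra.
  rewrite hrd in h1 e4; lra.
pose z := r * (K + `|T|) / (c * x * d).
set k := (Num.truncn z).+1.
have kz : z < k%:R := truncnS_gt z.
have [bk0 bkx Gbk IH] := claim k.
have hzk : r * (K + `|T|) < c * x * (1 + k%:R * d).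
  have cxd : 0 < c * x * d by rewrite !mulr_gt0.
  have cx : 0 < c * x by rewrite !mulr_gt0.
  have : r * (K + `|T|) < c * x * d * k%:R.
    by rewrite -ltr_pdivrMl // mulrC.
  lra.
have b'0 : 0 < b k.+1 by have [] := claim k.+1.
have hb' : r * b k.+1 = b k by rewrite bS mulrCA rri mulr1.
apply: (@ae01_itv_contra _ _ (b k.+1) (b k) _ _ _ GB).
- lra.
- nra.
- lra.
move=> y /andP[y1 y2] /ler_normlP [_ hy].
have y01 : 0 < y < 1 by apply/andP; split; lra.
have Gy : G (b k) <= G y.
  by apply: keyL => //; [apply/andP; split; lra | apply/andP; split; lra].
have nT1 : - `|T| <= T by rewrite lerNnormlW.
have nT0 : 0 <= `|T| by [].
have yT : - `|T| <= y * T by nra.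
set W := G (b k) - T in IH.
have Wpos : 0 < W by rewrite /W; lra.
have hW : W = G (b k) - T by [].
have e1 : b k.+1 * W <= y * W by rewrite ler_pM2r //; lra.
have e2 : y * W <= y * (G y - T) by rewrite ler_pM2l //; lra.
have e2' : y * (G y - T) = y * G y - y * T by ring.
have e3 : b k.+1 * W <= K + `|T| by lra.
have e4 : r * (b k.+1 * W) <= r * (K + `|T|) by rewrite ler_pM2l.
have e5 : b k * W = r * (b k.+1 * W) by rewrite -hb' mulrA.
lra.
Qed.
End Core.

Section Final.
Variable R : realType.
Notation mu := (@lebesgue_measure R).

Lemma contG (g h : R -> R) :
  (forall a b : R, 0 < a -> a <= b -> b < 1 ->
     mu.-integrable `[a, b] (EFin \o h) /\
     g b - g a = \int[mu]_(x in `[a, b]) h x) ->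
  forall x : R, 0 < x < 1 -> {for x, continuous g}.
Proof.
move=> GI x /andP[x0 x1].
pose a := x / 2; pose b := (x + 1) / 2.
have a0 : 0 < a by rewrite /a; lra.
have ab : a < b by rewrite /a /b; lra.
have b1 : b < 1 by rewrite /b; lra.
have xin : x \in `]a, b[ by rewrite in_itv /= /a /b; apply/andP; split; lra.
have [iab _] := GI a b a0 (ltW ab) b1.
have Fc := within_continuous_continuous ab
  (parameterized_integral_continuous (ltW ab) iab) xin.
have eqg : forall t : R, a <= t <= b ->
    g t = g a + parameterized_integral mu a t h.
  move=> t /andP[aT tb]; have [_ E] := GI a t a0 aT (le_lt_trans tb b1).
  by rewrite /parameterized_integral -E; ring.
apply/cvgrPdist_lt => e e0.
move/cvgrPdist_lt : Fc => /(_ e e0) FN.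
near=> t.
have tin : t \in `]a, b[ by near: t; exact: near_in_itvoo.
have Ht : `|parameterized_integral mu a x h - parameterized_integral mu a t h| < e.
  by near: t; exact: FN.
have /andP[ax xb] : a < x < b by move: (xin); rewrite in_itv.
have /andP[aT tb] : a < t < b by move: (tin); rewrite in_itv.
rewrite (eqg x) ?(eqg t); try (apply/andP; split; lra).
suff -> : forall u v w : R, u + v - (u + w) = v - w by [].
by move=> u v w; ring.
Unshelve. all: by end_near.
Qed.

Lemma measH (h : R -> R) :
  (forall a b : R, 0 < a -> a <= b -> b < 1 ->
     mu.-integrable `[a, b] (EFin \o h)) ->
  measurable_fun (`]0, 1[ : set R) h.
Proof.
move=> Hi.
pose E (n : nat) : set R := [set` `[(n.+2%:R)^-1, 1 - (n.+2%:R)^-1]].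
have nE (n : nat) : 0 < (n.+2%:R : R)^-1 <= 2^-1.
  apply/andP; split; first by rewrite invr_gt0 ltr0n.
  by rewrite lef_pV2 ?posrE ?ltr0n // ler_nat.
have -> : (`]0, 1[%classic : set R) = \bigcup_n E n.
  apply/seteqP; split => [x /=|x [n _]]; last first.
    rewrite /E /= !in_itv /= => /andP[h1 h2].
    have h1' : (n.+2%:R : R)^-1 <= x := h1.
    have h2' : x <= 1 - (n.+2%:R : R)^-1 := h2.
    have := nE n => /andP[h3 _].
    move: h1' h2' h3; generalize ((n.+2%:R : R)^-1) => u h1' h2' h3.
    apply/andP; split; lra.
  rewrite in_itv /= => /andP[x0 x1].
  pose z := x^-1 + (1 - x)^-1.
  exists (Num.truncn z) => //.
  have zk := truncnS_gt z.
  have xi : 0 < x^-1 by rewrite invr_gt0.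
  have x1i : 0 < (1 - x)^-1 by rewrite invr_gt0; lra.
  set k := Num.truncn z in zk *.
  have k2 : (0 : R) < k.+2%:R by rewrite ltr0n.
  have xk : x^-1 <= k.+2%:R.
    have : (k.+1%:R : R) <= k.+2%:R by rewrite ler_nat.
    rewrite /z in zk; lra.
  have x1k : (1 - x)^-1 <= k.+2%:R.
    have : (k.+1%:R : R) <= k.+2%:R by rewrite ler_nat.
    rewrite /z in zk; lra.
  have lx : (k.+2%:R)^-1 <= x.
    rewrite -[X in X <= _]div1r ler_pdivrMr //.
    apply: (le_trans (_ : 1 <= x * x^-1)); first by rewrite mulfV // gt_eqF.
    by rewrite ler_wpM2l // ltW.
  have l1x : (k.+2%:R)^-1 <= 1 - x.
    rewrite -[X in X <= _]div1r ler_pdivrMr //.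
    apply: (le_trans (_ : 1 <= (1 - x) * (1 - x)^-1)).
      by rewrite mulfV // gt_eqF // subr_gt0.
    by rewrite ler_wpM2l // subr_ge0 ltW.
  rewrite /E /= in_itv /=.
  by rewrite lx /= lerBrDl addrC -lerBrDl.
apply/measurable_fun_bigcup => [n|n]; first exact: measurable_itv.
have aux (u : R) : 0 < u <= 2^-1 -> u <= 1 - u /\ 1 - u < 1.
  by move=> /andP[p q]; split; lra.
have [hA hB] := aux _ (nE n).
have := nE n => /andP[h1 h2].
have := Hi _ _ h1 hA hB.
by move/measurable_int/measurable_EFinP.
Qed.

End Final.

Section AE01.
Variable R : realType.
Lemma ae01S (P Q : R -> Prop) : ae01 P ->
  (forall x : R, 0 < x < 1 -> P x -> Q x) -> ae01 Q.
Proof.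
move=> HP PQ.
apply: (@aeS R (fun x => 0 < x < 1 -> P x) (fun x => 0 < x < 1 -> Q x) HP).
by move=> x Px x01; apply: PQ => //; exact: Px.
Qed.
Lemma ae01S2 (P Q S : R -> Prop) : ae01 P -> ae01 Q ->
  (forall x : R, 0 < x < 1 -> P x -> Q x -> S x) -> ae01 S.
Proof.
move=> HP HQ PQ.
apply: (@aeS2 R (fun x => 0 < x < 1 -> P x) (fun x => 0 < x < 1 -> Q x)
  (fun x => 0 < x < 1 -> S x) HP HQ).
by move=> x Px Qx x01; apply: PQ => //; [exact: Px | exact: Qx].
Qed.
End AE01.

Theorem lemma5p9 (R : realType) (gamma : R) (u g h f : R -> R) :
  1 < gamma ->
  Linf01 f ->
  W21loc_derivs u g h ->
  ae01 (fun x => x * h x + gamma * g x = f x) ->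
  Linf01 (fun x => x * g x) ->
  W2inf_star u g h /\
  (forall M : R, ae01 (fun x => `|f x| <= M) ->
     ae01 (fun x => `|g x| <= M / gamma) /\
     ae01 (fun x => `|x * h x| <= 2 * M)).
Proof.
move=> g1 [mf [M0 fM0]] HW Heq [mxg [K xgK]].
have [Hder GIg] := HW.
have gc := @contG R _ _ GIg.
have GIn : forall a b : R, 0 < a -> a <= b -> b < 1 ->
    (@lebesgue_measure R).-integrable `[a, b] (EFin \o (fun x => - h x)) /\
    (fun x => - g x) b - (fun x => - g x) a =
      \int[@lebesgue_measure R]_(x in `[a, b]) (- h x).
  move=> a b a0 ab b1; have [ih E] := GIg a b a0 ab b1; split.
    exact: (integrableN ih).
  have -> : \int[@lebesgue_measure R]_(x in `[a, b]) (- h x) =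
      - \int[@lebesgue_measure R]_(x in `[a, b]) h x.
    rewrite -mulN1r -(RintegralZl _ _ ih); last exact: measurable_itv.
    by apply: eq_Rintegral => y _; rewrite mulN1r.
  by rewrite /= -E; ring.
have g0 : 0 < gamma by lra.
have hTT : forall M : R, gamma * (M / gamma) = M.
  by move=> M; rewrite mulrC divfK // gt_eqF.
have bnd : forall M, ae01 (fun x => `|f x| <= M) ->
    forall x : R, 0 < x < 1 -> `|g x| <= M / gamma.
  move=> M fM x x01.
  have HB1 : ae01 (fun x => x * h x <= M - gamma * g x).
    apply: (@ae01S2 R _ _ _ Heq fM) => y y01 E1 /ler_normlP [_ fy]; lra.
  have HB2 : ae01 (fun x => x * (fun x => - h x) x <= M - gamma * (fun x => - g x) x).
    apply: (@ae01S2 R _ _ _ Heq fM) => y y01 E1 /ler_normlP [fy _] /=; lra.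
  have GB2 : ae01 (fun x => `|x * (fun x => - g x) x| <= K).
    by apply: (@ae01S R _ _ xgK) => y y01 H1 /=; rewrite mulrN normrN.
  have up := @boundG R gamma M K _ _ g1 gc GIg HB1 xgK x x01.
  have lo := @boundG R gamma M K _ _ g1 (@contG R _ _ GIn) GIn HB2 GB2 x x01.
  rewrite /= in lo.
  by apply/ler_normlP; split; lra.
have bnd2 : forall M, ae01 (fun x => `|f x| <= M) ->
    ae01 (fun x => `|x * h x| <= 2 * M).
  move=> M fM.
  apply: (@ae01S2 R _ _ _ Heq fM) => x x01 E1 /ler_normlP [fx1 fx2].
  have /ler_normlP [gx1 gx2] := bnd M fM x x01.
  have e1 : gamma * g x <= gamma * (M / gamma) by rewrite ler_pM2l.
  have e2 : gamma * (- (M / gamma)) <= gamma * g x by rewrite ler_pM2l //; lra.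
  rewrite mulrN hTT in e2; rewrite hTT in e1.
  by apply/ler_normlP; split; lra.
split.
- split; first exact: HW.
  split.
  + split.
      apply: open_continuous_measurable_fun; first exact: interval_open.
      by move=> x; rewrite inE /= in_itv /= => x01; exact: gc x x01.
    exists (M0 / gamma).
    by apply: (@ae01S R _ _ fM0) => x x01 _; exact: bnd fM0 x x01.
  + split.
      apply: measurable_funM; first exact: measurable_id.
      by apply: (@measH R) => a b a0 ab b1; have [] := GIg a b a0 ab b1.
    exists (2 * M0); exact: bnd2.
- move=> M fM; split; last exact: bnd2.
  by apply: (@ae01S R _ _ fM) => x x01 _; exact: bnd fM x x01.
Qed.
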